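(* Let $n\ge1$ and let $d_1,\dots,d_n$ be positive real numbers. Let $\mathbf{d}_n=\operatorname{diag}(d_1,\dots,d_n)$, let $\mathbf{L}_n$ be the $n\times n$ lower triangular matrix all of whose entries on and below the diagonal equal $1$, and let $$\mathbf{M}(\mathbf{d}_n)=\mathbf{L}_n\mathbf{d}_n+\mathbf{d}_n\mathbf{L}_n^{\mathrm{T}}-\mathbf{d}_n.$$ Then the real symmetric matrix $\mathbf{M}(\mathbf{d}_n)$ is positive definite if and only if $d_1<d_2<\dots<d_n$. *)

(* Defs.v *)
From mathcomp Require Import all_boot all_order all_algebra.
Set Implicit Arguments. Unset Strict Implicit. Unset Printing Implicit Defensive.
Import Order.TTheory GRing.Theory Num.Theory.
Local Open Scope ring_scope.

Definition lower_ones (R : nzRingType) (n : nat) : 'M[R]_n :=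
  \matrix_(i < n, j < n) (if (j <= i)%N then 1 else 0).

Definition diagd (R : nzRingType) (n : nat) (d : 'I_n -> R) : 'M[R]_n :=
  diag_mx (\row_i d i).

Definition Mmat (R : nzRingType) (n : nat) (d : 'I_n -> R) : 'M[R]_n :=
  lower_ones R n *m diagd d + diagd d *m (lower_ones R n)^T - diagd d.

Definition posdef (R : numDomainType) (n : nat) (A : 'M[R]_n) : Prop :=
  A^T = A /\ forall x : 'cV[R]_n, x != 0 -> 0 < (x^T *m A *m x) 0 0.

(* Main.v *)
Require Import Defs.
From mathcomp Require Import all_boot all_order all_algebra.
From mathcomp Require Import ring lra.
Import Order.TTheory GRing.Theory Num.Theory.
Local Open Scope ring_scope.

Section Aux.
Variable (R : realFieldType) (n : nat) (d : 'I_n.+1 -> R).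

Definition DD (k : nat) : R := d (inord k).
Definition EE (k : nat) : R := DD k - (if k is k'.+1 then DD k' else 0).

Lemma tele_nat k : \sum_(m < k.+1) EE m = DD k.
Proof.
elim: k => [|k IH]; first by rewrite big_ord_recr big_ord0 /EE /= add0r subr0.
by rewrite big_ord_recr IH /EE /=; ring.
Qed.

Lemma tele (k : 'I_n.+1) : \sum_(m < n.+1 | (m <= k)%N) EE m = d k.
Proof.
rewrite -[d k]/(d k) -{2}(inord_val k) -/(DD k) -tele_nat.
rewrite (big_ord_widen n.+1 EE (ltn_ord k)).
by apply: eq_bigl => m; rewrite ltnS.
Qed.

Lemma Mentry (i j : 'I_n.+1) :
  Mmat d i j = \sum_(m < n.+1 | (m <= i)%N && (m <= j)%N) EE m.
Proof.
rewrite /Mmat /diagd /lower_ones mul_mx_diag mul_diag_mx !mxE.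
case: (ltngtP i j) => h.
- rewrite (_ : (i == j) = false); last by apply/eqP => e; move: h; rewrite e ltnn.
  rewrite /= mul0r mulr1 add0r mulr0n subr0.
  rewrite -tele; apply: eq_bigl => m.
  case: (leqP m i) => //= hm; by rewrite (leq_trans hm (ltnW h)).
- rewrite (_ : (i == j) = false); last by apply/eqP => e; move: h; rewrite e ltnn.
  rewrite /= mul1r mulr0 addr0 mulr0n subr0.
  rewrite -tele; apply: eq_bigl => m.
  case: (leqP m j) => /=; last by rewrite andbF.
  by move=> hm; rewrite (leq_trans hm (ltnW h)).
- have -> : i = j by apply: val_inj.
  rewrite eqxx /= mulr1n mul1r mulr1 addrK.
  by rewrite -tele; apply: eq_bigl => m; rewrite andbb.
Qed.

Lemma quad (y : 'I_n.+1 -> R) :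
  \sum_i \sum_j y i * Mmat d i j * y j =
  \sum_(m < n.+1) EE m * (\sum_(i < n.+1 | (m <= i)%N) y i) ^+ 2.
Proof.
transitivity (\sum_(i < n.+1) \sum_(j < n.+1) \sum_(m < n.+1)
   (if (m <= i)%N && (m <= j)%N then y i * EE m * y j else 0)).
  apply: eq_bigr => i _; apply: eq_bigr => j _.
  rewrite Mentry big_mkcond mulr_sumr mulr_suml; apply: eq_bigr => m _.
  by case: ifP => _; rewrite ?mulr0 ?mul0r.
rewrite exchange_big /=.
under eq_bigr do rewrite exchange_big /=.
rewrite exchange_big /=; apply: eq_bigr => m _.
rewrite expr2 [in RHS]big_mkcond [in RHS]mulr_suml [in RHS]mulr_sumr exchange_big /=.
apply: eq_bigr => i _.
rewrite [in RHS]big_mkcond [in RHS]mulr_sumr [in RHS]mulr_sumr; apply: eq_bigr => j _.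
case: (m <= i)%N; case: (m <= j)%N => /=; rewrite ?mulr0 ?mul0r //; ring.
Qed.

End Aux.
Arguments DD {R n} d k.
Arguments EE {R n} d k.

Lemma qform (R : realFieldType) (n : nat) (A : 'M[R]_n) (x : 'cV[R]_n) :
  (x^T *m A *m x) 0 0 = \sum_i \sum_j x i 0 * A i j * x j 0.
Proof.
rewrite mxE exchange_big /=; apply: eq_bigr => j _.
rewrite mxE mulr_suml; apply: eq_bigr => i _; by rewrite mxE.
Qed.

Lemma tail_tele (R : realFieldType) (n m : nat) (f : nat -> R) :
  (m <= n.+1)%N ->
  \sum_(i < n.+1 | (m <= i)%N) (f i - f i.+1) = f m - f n.+1.
Proof.
move=> hm.
transitivity (\sum_(m <= i < n.+1) (f i - f i.+1)); first by rewrite big_geq_mkord.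
rewrite -[RHS]opprB -(telescope_sumr _ hm) -sumrN.
by apply: eq_bigr => i _; rewrite opprB.
Qed.

Lemma tail_split (R : realFieldType) (n : nat) (y : 'I_n.+1 -> R) (i : 'I_n.+1) :
  \sum_(l < n.+1 | (i <= l)%N) y l = y i + \sum_(l < n.+1 | (i.+1 <= l)%N) y l.
Proof.
rewrite (bigD1 i) //=; congr (_ + _); apply: eq_bigl => l.
rewrite ltn_neqAle andbC; congr (_ && _).
by rewrite eq_sym.
Qed.

Theorem lemma6 (R : realFieldType) (n : nat) (d : 'I_n.+1 -> R)
  (hd : forall i, 0 < d i) :
  posdef (Mmat d) <-> (forall i j : 'I_n.+1, (i < j)%N -> d i < d j).
Proof.
split.
- move=> [_ hpos].
  have step : forall k, (k < n)%N -> DD d k < DD d k.+1.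
    move=> k hk.
    pose T (t : nat) : R := if t == k.+1 then 1 else 0.
    pose x : 'cV[R]_n.+1 := \col_i (T i - T i.+1).
    have hx : x != 0.
      apply/eqP => /matrixP/(_ (inord k.+1) 0); rewrite !mxE inordK ?ltnS //.
      rewrite /T eqxx (_ : (k.+2 == k.+1) = false) ?subr0; last by apply/negbTE; rewrite eqSS; elim: (k) => //.
      by move/eqP; rewrite oner_eq0.
    have := hpos x hx; rewrite qform quad.
    have hS : forall m : 'I_n.+1, \sum_(i < n.+1 | (m <= i)%N) x i 0 = T m.
      move=> m; rewrite (eq_bigr (fun i : 'I_n.+1 => T i - T i.+1)); last by move=> i _; rewrite mxE.
      rewrite tail_tele; last by apply: ltnW.
      rewrite /T (_ : (n.+1 == k.+1) = false) ?subr0 //.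
      by apply/negbTE; rewrite eqSS neq_ltn hk orbT.
    under eq_bigr do rewrite hS.
    rewrite (bigD1 (inord k.+1)) //= big1; last first.
      move=> m hm; rewrite /T.
      case: eqP => e; last by rewrite expr0n /= mulr0.
      by move: hm; rewrite -e inord_val eqxx.
    rewrite inordK ?ltnS // /T eqxx expr1n mulr1 addr0 /EE.
    by rewrite subr_gt0.
  move=> i j hij.
  rewrite -(inord_val i) -(inord_val j) -/(DD d i) -/(DD d j).
  have hj := ltn_ord j.
  elim: (val j) hij hj => [//|m IH] hij hm.
  rewrite ltnS leq_eqVlt in hij; case/orP: hij => [/eqP e|hij].
    by rewrite e; apply: step; rewrite -ltnS.

  apply: lt_trans (IH hij (ltnW hm)) (step _ _); by rewrite -ltnS.
- move=> hinc; split.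
    by apply/matrixP => i j; rewrite mxE !Mentry; apply: eq_bigl => m; rewrite andbC.
  move=> x hx.
  have hE : forall m : 'I_n.+1, 0 < EE d m.
    move=> [[|k] hk]; rewrite /EE /=.
      by rewrite subr0; apply: hd.
    rewrite subr_gt0 /DD; apply: hinc.
    by rewrite !inordK // ltnW.
  pose S (m : 'I_n.+1) := \sum_(i < n.+1 | (m <= i)%N) x i 0.
  rewrite qform quad.
  case: (pickP (fun m => S m != 0)) => [m hm | h0]; last first.
    exfalso; move/negP: hx; apply; apply/eqP/matrixP => i j.
    rewrite (ord1 j) mxE.
    have := h0 i; rewrite /= /S tail_split => /negbFE/eqP.
    have -> : \sum_(l < n.+1 | (i.+1 <= l)%N) x l 0 = 0.
      case: (ltnP i.+1 n.+1) => hi.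
        by move: (h0 (inord i.+1)); rewrite /= /S inordK // => /negbFE/eqP.
      rewrite big1 // => l hl; exfalso.
      by move: (leq_trans hi hl); rewrite ltnNge -ltnS ltn_ord.
    by rewrite addr0.
  rewrite (bigD1 m) //=.
  have h1 : 0 <= \sum_(i < n.+1 | i != m) EE d i * (\sum_(i0 < n.+1 | (i <= i0)%N) x i0 0) ^+ 2.
    by apply: sumr_ge0 => i _; apply: mulr_ge0; [apply: ltW | apply: sqr_ge0].
  have h2 : 0 < EE d m * S m ^+ 2.
    by apply: mulr_gt0 => //; rewrite lt_def sqr_ge0 sqrf_eq0 hm.
  rewrite /S in h2; lra.
Qed.
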